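(* Any cache state $\mathcal S=\{y_1, \dots, y_k\}$, such that, for some $d$, the balls $\mathcal B_{d}(y_h)$ for $h=1,\dots, k$ are a tessellation of $\mathcal X$ (i.e.,~$\cup_h \mathcal B_d(y_h)=\mathcal X$ and $|\mathcal B_d(y_i)\cap \mathcal B_d(y_j)|=0$ for each $i$ and $j$), is optimal.
   Context: $\mathcal X$ is a bounded subset of $\mathbb R^p$, the cache holds $k$ objects, $C_a(x,y)=h(\|x-y\|)$ with $h$ non-decreasing and non-negative, $C_r>0$ is the retrieval cost, and $C(x,\mathcal S)=\min(\inf_{y\in\mathcal S}C_a(x,y),C_r)$. Requests have constant spatial density $\lambda$ over $\mathcal X$; the expected cost of state $\mathcal S$ is $\bar C(\mathcal S)=\int_{\mathcal X}\lambda C(x,\mathcal S)\,dx$, and a state is optimal if it minimizes it. $\mathcal B_d(y)$ is the ball of radius $d$ centered at $y$ and $|\cdot|$ denotes volume. For any state, $\bar C(\mathcal S)\ge\lambda kF(|\mathcal X|/k)$ where $F(v)=\int_{\mathcal B(y,v)}\min(C_a(x,y),C_r)\,dx$ with $\mathcal B(y,v)$ the ball of volume $v$ centered in $y$; the corollary identifies states achieving this bound. *)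

(* Defs.v *)
From mathcomp Require Import all_boot all_order all_algebra.
From mathcomp Require Import all_classical all_reals all_analysis.
From HB Require Import structures.
Set Implicit Arguments. Unset Strict Implicit. Unset Printing Implicit Defensive.
Import Order.TTheory GRing.Theory Num.Theory.
Local Open Scope classical_set_scope.
Local Open Scope ring_scope.

(* Points of R^p are row vectors 'rV[R]_p.  [vec R p] is a copy of 'rV[R]_p
   pointed by the origin (needed only to build the generated sigma-algebra). *)
Definition vec (R : realType) (p : nat) : Type := 'rV[R]_p.
HB.instance Definition _ (R : realType) (p : nat) :=
  Choice.copy (vec R p) 'rV[R]_p.
HB.instance Definition _ (R : realType) (p : nat) :=
  isPointed.Build (vec R p) (0%R : 'rV[R]_p).

Definition eucl_dist (R : realType) (p : nat) (x y : 'rV[R]_p) : R :=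
  Num.sqrt (\sum_(i < p) (x ord0 i - y ord0 i) ^+ 2).

Definition cball (R : realType) (p : nat) (y : 'rV[R]_p) (d : R) : set 'rV[R]_p :=
  [set x | eucl_dist x y <= d].

Definition box (R : realType) (p : nat) (a b : 'rV[R]_p) : set 'rV[R]_p :=
  [set x | forall i : 'I_p, a ord0 i < x ord0 i <= b ord0 i].

Definition boxes (R : realType) (p : nat) : set (set (vec R p)) :=
  [set B | exists a b, B = box a b].

(* R^p with its Borel sigma-algebra (generated by the boxes). *)
Notation Rp R p := (g_sigma_algebraType (@boxes R p)).

(* mu is the p-dimensional Lebesgue measure: a measure on the Borel sets of
   R^p giving to each box the product of its side lengths (this determines
   mu uniquely). *)
Definition is_lebesgue (R : realType) (p : nat)
    (mu : {measure set (Rp R p) -> \bar R}) : Prop :=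
  forall a b : 'rV[R]_p, (forall i, a ord0 i <= b ord0 i) ->
    mu (box a b) = (\prod_(i < p) (b ord0 i - a ord0 i))%:E.

Definition cost (R : realType) (p k : nat) (h : R -> R) (Cr : R)
    (S : 'I_k -> 'rV[R]_p) (x : 'rV[R]_p) : R :=
  \big[Order.min/Cr]_(j < k) h (eucl_dist x (S j)).

Definition exp_cost (R : realType) (p k : nat)
    (mu : {measure set (Rp R p) -> \bar R}) (X : set (Rp R p))
    (lam : R) (h : R -> R) (Cr : R) (S : 'I_k -> 'rV[R]_p) : \bar R :=
  (\int[mu]_(x in X) (lam * cost h Cr S x)%:E)%E.

Definition cache_state (R : realType) (p k : nat) (X : set (Rp R p))
    (S : 'I_k -> 'rV[R]_p) : Prop :=
  injective S /\ forall j, X (S j).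

Definition optimal (R : realType) (p k : nat)
    (mu : {measure set (Rp R p) -> \bar R}) (X : set (Rp R p))
    (lam : R) (h : R -> R) (Cr : R) (S : 'I_k -> 'rV[R]_p) : Prop :=
  cache_state X S /\
  forall S' : 'I_k -> 'rV[R]_p, cache_state X S' ->
    (exp_cost mu X lam h Cr S <= exp_cost mu X lam h Cr S')%E.

(* Main.v *)
Require Import Defs.
From mathcomp Require Import all_boot all_order all_algebra.
From mathcomp Require Import all_classical all_reals all_analysis.
From mathcomp Require Import measurable_realfun.
From mathcomp Require Import ring lra.
Import Order.TTheory GRing.Theory Num.Theory.
Local Open Scope classical_set_scope.
Local Open Scope ring_scope.

Section Approx.
Context (R : realType).

Lemma approx_low (d v : R) N : 0 < d -> 0 <= v ->
  \sum_(n < N) d * ((n.+1%:R * d < v)%R)%:R <= v /\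
  \sum_(n < N) d * ((n.+1%:R * d < v)%R)%:R <= N%:R * d.
Proof.
move=> d0 v0; elim: N => [|N [IH1 IH2]].
  by rewrite big_ord0 mul0r.
rewrite big_ord_recr /= -[N.+1%:R]natr1.
have [H|H] := ltP ((N%:R + 1) * d) v.
  rewrite mulr1; split; lra.
rewrite mulr0 addr0; split; lra.
Qed.

Lemma approx_up (d v : R) N : 0 < d ->
  Num.min v (N.+1%:R * d) <= d + \sum_(n < N) d * ((n.+1%:R * d < v)%R)%:R.
Proof.
move=> d0; elim: N => [|N IH].
  by rewrite big_ord0 addr0 ge_min mul1r lexx orbT.
rewrite big_ord_recr /=.
have [H|H] := ltP (N.+1%:R * d) v.
  rewrite mulr1; move: IH; rewrite (min_r (ltW H)) => IH.
  rewrite ge_min; apply/orP; right.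
  rewrite -[N.+2%:R]natr1; lra.
rewrite mulr0 addr0; move: IH; rewrite (min_l H) => IH.
by rewrite ge_min IH.
Qed.


Section DistCmp.
Context d (T : measurableType d) (mu : {measure set T -> \bar R}).

Definition Sapprox (del : R) N (f : T -> R) (x : T) : R :=
  \sum_(n < N) del * \1_([set y | n.+1%:R * del < f y]) x.

Lemma Sapprox_E del N f x :
  Sapprox del N f x = \sum_(n < N) del * ((n.+1%:R * del < f x)%R)%:R.
Proof.
apply: eq_bigr => n _; congr (_ * _); rewrite indicE.
rewrite (_ : (x \in _) = (n.+1%:R * del < f x)) //.
by apply/idP/idP; rewrite in_setE.
Qed.

Lemma int_Sapprox (X : set T) del N f : measurable X -> 0 <= del ->
  measurable_fun setT f ->
  (\int[mu]_(x in X) (Sapprox del N f x)%:E =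
   \sum_(n < N) (del%:E * mu ([set y | (n.+1%:R * del < f y)%R] `&` X)))%E.
Proof.
move=> mX d0 mf.
have mA n : measurable [set y | (n.+1%:R * del < f y)%R].
  have := mf measurableT _ (measurable_itv `]n.+1%:R * del, +oo[).
  rewrite setTI; congr measurable; apply/seteqP; split => x /=;
    by rewrite in_itv /= andbT.
transitivity (\int[mu]_(x in X)
   (\sum_(n < N) (del * \1_([set y | (n.+1%:R * del < f y)%R]) x)%:E))%E.
  by apply: eq_integral => x _; rewrite sumEFin.
rewrite ge0_integral_sum //.
- apply: eq_bigr => n _.
  transitivity (\int[mu]_(x in X)
     (del%:E * (\1_([set y | (n.+1%:R * del < f y)%R]) x)%:E))%E.
    by apply: eq_integral => x _; rewrite EFinM.
  rewrite ge0_integralZl_EFin //.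
  all: first [by rewrite integral_indic | by move=> x _; rewrite lee_fin indicE |
     by apply/measurable_EFinP; exact: measurable_indic | idtac].

- move=> n; apply/measurable_EFinP; apply: measurable_funM.
    exact: measurable_cst.
  exact: measurable_indic.
- by move=> n x _; rewrite lee_fin mulr_ge0 // indicE.
Qed.


Lemma Sapprox_meas del N f : measurable_fun setT f ->
  measurable_fun setT (Sapprox del N f).
Proof.
move=> mf; apply: measurable_sum => n; apply: measurable_funM.
  exact: measurable_cst.
apply: measurable_indic.
have := mf measurableT _ (measurable_itv `]n.+1%:R * del, +oo[).
rewrite setTI; congr measurable; apply/seteqP; split => x /=;
  by rewrite in_itv /= andbT.
Qed.

Lemma dist_cmp (X : set T) (f g : T -> R) (V : R) : measurable X ->
  (mu X < +oo)%E -> measurable_fun setT f -> measurable_fun setT g -> 0 < V ->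
  (forall x, X x -> 0 <= f x <= V) -> (forall x, X x -> 0 <= g x) ->
  (forall t, (mu (X `&` [set x | (t < f x)%R]) <= mu (X `&` [set x | (t < g x)%R]))%E) ->
  (\int[mu]_(x in X) (f x)%:E <= \int[mu]_(x in X) (g x)%:E)%E.
Proof.
move=> mX Xfin mf mg V0 fb gb Hd.
have [m mE] : exists m : R, mu X = m%:E.
  exists (fine (mu X)); rewrite fineK // ge0_fin_numE //; exact: measure_ge0.
have m0 : 0 <= m by rewrite -lee_fin -mE; exact: measure_ge0.
apply/lee_addgt0Pr => e e0.
set N := Num.Def.archi_bound (V * m / e).
have HN : V * m / e < N%:R by apply: archi_boundP; apply: divr_ge0 => //;
  [apply: mulr_ge0 => //; exact: ltW | exact: ltW].
move: HN; rewrite ltr_pdivrMr // => HN.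
set del := V / N.+1%:R.
have N0 : 0 < N.+1%:R :> R by rewrite ltr0n.
have del0 : 0 < del by apply: divr_gt0.
have Ndel : N.+1%:R * del = V by rewrite /del mulrC divfK // gt_eqF.
have Hdm : del * m <= e.
  rewrite /del mulrAC ler_pdivrMr // -[N.+1%:R]natr1.
  have : 0 <= e by exact: ltW.
  nra.
have mfX : measurable_fun X f by exact: measurable_funS mf.
have mgX : measurable_fun X g by exact: measurable_funS mg.
have mSf := Sapprox_meas del N f mf.
have mSg := Sapprox_meas del N g mg.
apply: (@le_trans _ _ (\int[mu]_(x in X) ((del%:E + (Sapprox del N f x)%:E)))%E).
  apply: ge0_le_integral => //.
  - by move=> x Xx; rewrite lee_fin; have /andP[] := fb x Xx.
  - exact/measurable_EFinP.
  - apply: emeasurable_funD; first exact: measurable_cst.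
    exact/measurable_EFinP/(measurable_funS _ _ mSf).
  - move=> x Xx; rewrite -EFinD lee_fin Sapprox_E.
    have /andP[f0 fV] := fb x Xx.
    by have := approx_up del (f x) N del0; rewrite Ndel min_l.
rewrite ge0_integralD //; cycle 1.
all: try solve [ by move=> x _; rewrite lee_fin; exact: ltW | exact: measurable_cst |
  exact/measurable_EFinP/(measurable_funS _ _ mSf) |
  by move=> x _; rewrite lee_fin Sapprox_E; apply: sumr_ge0 => n _; apply: mulr_ge0 => //; exact: ltW ].
rewrite integral_cst // mE int_Sapprox //; last exact: ltW.
apply: (@le_trans _ _ ((del * m)%:E + \sum_(n < N)
   (del%:E * mu ([set y | (n.+1%:R * del < g y)%R] `&` X)))%E).
  apply: leeD2l; apply: lee_sum => n _; apply: lee_wpmul2l.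
    by rewrite lee_fin; exact: ltW.
  by rewrite setIC [X in (_ <= mu X)%E]setIC; exact: Hd.
rewrite -int_Sapprox //; last exact: ltW.
rewrite addeC; apply: leeD; last by rewrite lee_fin.
apply: ge0_le_integral => //.
- by move=> x _; rewrite lee_fin Sapprox_E; apply: sumr_ge0 => n _; apply: mulr_ge0 => //; exact: ltW.
- exact/measurable_EFinP/(measurable_funS _ _ mSg).
- exact/measurable_EFinP.
- move=> x Xx; rewrite lee_fin Sapprox_E.
  by have [] := approx_low del (g x) N del0 (gb x Xx).
Qed.

End DistCmp.
End Approx.

Section S.
Context (R : realType) (p : nat).
Local Notation T := (Rp R p).

Lemma box_meas (a b : 'rV[R]_p) : measurable (box a b : set T).
Proof. by apply: sub_sigma_algebra; exists a, b. Qed.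

Lemma dist_ge0 (x y : 'rV[R]_p) : 0 <= eucl_dist x y.
Proof. exact: sqrtr_ge0. Qed.

Lemma coord_le_dist (x : 'rV[R]_p) i : `|x ord0 i| <= eucl_dist x 0.
Proof.
rewrite /eucl_dist -sqrtr_sqr; apply: ler_wsqrtr.
rewrite (bigD1 i) //= mxE subr0 lerDl; apply: sumr_ge0 => j _; exact: sqr_ge0.
Qed.

Lemma coord_bound (x : 'rV[R]_p) : exists n : nat, forall i, `|x ord0 i| < n%:R.
Proof.
exists (Num.Def.archi_bound (eucl_dist x 0)) => i.
exact: le_lt_trans (coord_le_dist x i) (archi_boundP (dist_ge0 _ _)).
Qed.

Lemma coord_meas (i : 'I_p) : measurable_fun setT (fun x : T => x ord0 i).
Proof.
apply: (measurability (@measurable_realfun.RGenOInfty.G R)).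
  exact: measurable_realfun.RGenOInfty.measurableE.
move=> _ [_ [a ->] <-].
pose lo (n:nat) : 'rV[R]_p := \row_j (if j == i then a else - n%:R).
pose hi (n:nat) : 'rV[R]_p := \row_j (Num.max a 0 + n%:R).
have -> : setT `&` (fun x : T => x ord0 i) @^-1` `]a, +oo[ =
    \bigcup_n (box (lo n) (hi n) : set T).
  apply/seteqP; split => x /=.
  - rewrite in_itv /= andbT => -[_ ax].
    have [n Hn] := coord_bound x.
    exists n => // j; rewrite !mxE; have := Hn j; rewrite ltr_norml => /andP[h1 h2].
    apply/andP; split.
      by case: eqP => [->|_].
    apply: le_trans (ltW h2) _; rewrite lerDr le_max lexx orbT //.
  - move=> [n _ Hb]; split => //; have := Hb i; rewrite !mxE eqxx.
    by rewrite in_itv /= andbT => /andP[].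
apply: bigcupT_measurable => n; exact: box_meas.
Qed.

Lemma dist_meas (c : 'rV[R]_p) : measurable_fun setT (fun x : T => eucl_dist x c).
Proof.
rewrite /eucl_dist.
apply: (measurableT_comp (measurable_realfun.continuous_measurable_fun (@sqrt_continuous R))).
apply: measurable_sum => i.
apply: measurable_funX; apply: measurable_funB; first exact: coord_meas.
exact: measurable_cst.
Qed.


Lemma hd_meas (h : R -> R) (Hh : forall r s, 0 <= r -> r <= s -> h r <= h s)
  (c : 'rV[R]_p) : measurable_fun setT (fun x : T => h (eucl_dist x c)).
Proof.
have -> : (fun x : T => h (eucl_dist x c)) =
    (fun r => h (Num.max r 0)) \o (fun x : T => eucl_dist x c).
  by apply/funext => x /=; rewrite max_l //; exact: dist_ge0.
apply: measurableT_comp (dist_meas c).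
apply: nondecreasing_measurable => // r s rs; apply: Hh.
  by rewrite le_max lexx orbT.
by rewrite ge_max !le_max rs lexx orbT.
Qed.

Lemma bigmin_meas (I : Type) (r : seq I) (F : I -> T -> R) (Cr : R) :
  (forall i, measurable_fun setT (F i)) ->
  measurable_fun setT (fun x => \big[Order.min/Cr]_(i <- r) F i x).
Proof.
move=> mF; elim: r => [|i r IH].
  by under eq_fun do rewrite big_nil; exact: measurable_cst.
under eq_fun do rewrite big_cons.
exact: measurable_minr.
Qed.

Lemma cost_meas k (h : R -> R) (Hh : forall r s, 0 <= r -> r <= s -> h r <= h s)
  Cr (S : 'I_k -> 'rV[R]_p) : measurable_fun setT (cost h Cr S : T -> R).
Proof. by apply: bigmin_meas => j; exact: hd_meas. Qed.

Definition shift (c : 'rV[R]_p) : T -> T := fun x => x - c.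

Lemma shift_box (c a b : 'rV[R]_p) : shift c @^-1` box a b = box (a + c) (b + c).
Proof.
apply/seteqP; split => x /= H i; have := H i; rewrite !mxE => /andP[h1 h2];
  apply/andP; split; lra.
Qed.

Lemma shift_meas c : measurable_fun setT (shift c).
Proof.
apply: (@measurability _ _ T T setT (shift c) (@boxes R p)) => //.
move=> _ [_ [a [b ->]] <-]; rewrite setTI shift_box; exact: box_meas.
Qed.

Lemma box_empty (a b : 'rV[R]_p) : ~ (forall i, a ord0 i <= b ord0 i) -> box a b = set0.
Proof.
move=> /existsNP [i Hi]; apply/seteqP; split => x // /(_ i) /andP[h1 h2].
by apply: Hi; apply: ltW; exact: lt_le_trans h1 h2.
Qed.

Lemma boxesI : setI_closed (boxes (R:=R) (p:=p)).
Proof.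
move=> _ _ [a [b ->]] [a' [b' ->]].
exists (\row_i Num.max (a ord0 i) (a' ord0 i)), (\row_i Num.min (b ord0 i) (b' ord0 i)).
apply/seteqP; split => x /=.
- move=> [H1 H2] i; rewrite !mxE; have /andP[u1 u2] := H1 i; have /andP[v1 v2] := H2 i.
  by rewrite gt_max le_min u1 u2 v1 v2.
- move=> H; split => i; have := H i; rewrite !mxE gt_max le_min => /andP[/andP[? ?] /andP[? ?]];
  by apply/andP; split.
Qed.

Variable mu : {measure set T -> \bar R}.
Hypothesis Hmu : is_lebesgue mu.

Lemma mu_box_fin (a b : 'rV[R]_p) : (mu (box a b) < +oo)%E.
Proof.
have [H|H] := pselect (forall i, a ord0 i <= b ord0 i).
  by rewrite Hmu // ltry.
by rewrite box_empty // measure0 ltry.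
Qed.

Lemma shift_inv (c : 'rV[R]_p) (A : set T) : measurable A -> mu (shift c @^-1` A) = mu A.
Proof.
move=> mA.
pose g (n:nat) : set T := box (\row_i (- n%:R)) (\row_i n%:R).
pose m2 : {measure set T -> \bar R} := pushforward mu (shift c).
have := measure_unique ((@boxes R p) : set (set T)) g erefl boxesI _ _ mu (m2 (shift_meas c)) _ _ A mA.
move=> ->.
- by [].
- by move=> n; exists (\row_i (- n%:R)), (\row_i n%:R).
- apply/seteqP; split => x // _.
  have [n Hn] := coord_bound x.
  exists n => // i; rewrite !mxE; have := Hn i; rewrite ltr_norml => /andP[h1 h2].
  by rewrite h1 ltW.
- move=> _ [a [b ->]]; rewrite /m2 /= /pushforward shift_box.
  have [H|H] := pselect (forall i, a ord0 i <= b ord0 i).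
    rewrite !Hmu //; last by move=> i; rewrite !mxE lerD2r.
    by congr (_%:E); apply: eq_bigr => i _; rewrite !mxE; ring.
  rewrite (box_empty a b H) (box_empty (a + c) (b + c)) ?measure0 // => H'.
  by apply: H => i; have := H' i; rewrite !mxE lerD2r.
- move=> n; exact: mu_box_fin.
Qed.


Lemma meas_le_set (f : T -> R) t : measurable_fun setT f ->
  measurable [set x | f x <= t].
Proof.
move=> mf; have := mf measurableT _ (measurable_itv `]-oo, t]).
rewrite setTI; congr measurable; apply/seteqP; split => x /=;
  by rewrite in_itv /=.
Qed.

Section Sets.
Context (I : eqType).

Lemma bigU_mem (s : seq I) (A : I -> set T) x :
  (\big[setU/set0]_(i <- s) A i) x <-> exists i, i \in s /\ A i x.
Proof.
elim: s => [|i s IH]; rewrite ?big_nil ?big_cons.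
  by split => // -[j []]; rewrite in_nil.
split.
  case=> [Ai|/IH [j [js Aj]]]; first by exists i; rewrite mem_head.
  by exists j; rewrite in_cons js orbT.
move=> [j []]; rewrite in_cons => /orP [/eqP -> | js] Aj; first by left.
by right; apply/IH; exists j.
Qed.

Lemma bigU_meas (s : seq I) (A : I -> set T) : (forall i, measurable (A i)) ->
  measurable (\big[setU/set0]_(i <- s) A i).
Proof.
move=> mA; elim: s => [|i s IH]; rewrite ?big_nil ?big_cons //.
exact: measurableU.
Qed.

Lemma mu_subadd (s : seq I) (A : I -> set T) : (forall i, measurable (A i)) ->
  (mu (\big[setU/set0]_(i <- s) A i) <= \sum_(i <- s) mu (A i))%E.
Proof.
move=> mA; elim: s => [|i s IH]; rewrite ?big_nil ?big_cons ?measure0 //.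
apply: le_trans (measureU2 _ _ _) _ => //; first exact: bigU_meas.
exact: leeD2l.
Qed.

Lemma mu_null_inter (B : set T) (s : seq I) (A : I -> set T) :
  measurable B -> (forall i, measurable (A i)) ->
  (forall j, j \in s -> mu (B `&` A j) = 0%E) ->
  mu (B `&` \big[setU/set0]_(j <- s) A j) = 0%E.
Proof.
move=> mB mA; elim: s => [|j s IH] H; rewrite ?big_nil ?big_cons ?setI0 ?measure0 //.
rewrite setIUr; apply/eqP; rewrite eq_le measure_ge0 andbT.
apply: le_trans (measureU2 _ _ _) _; first exact: measurableI.
  by apply: measurableI => //; exact: bigU_meas.
have h1 := H j (mem_head _ _).
have h2 : mu (B `&` \big[setU/set0]_(j <- s) A j) = 0%E.
  by apply: IH => i iS; apply: H; rewrite in_cons iS orbT.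
apply: (@le_trans _ _ (0 + 0)%E); last by rewrite adde0.
apply: leeD; [rewrite -[X in (_ <= X)%E]h1 | rewrite -[X in (_ <= X)%E]h2] => //.
Qed.

Lemma mu_superadd (s : seq I) (A : I -> set T) : uniq s ->
  (forall i, measurable (A i)) ->
  (forall i j, i != j -> mu (A i `&` A j) = 0%E) ->
  (forall i, (mu (A i) < +oo)%E) ->
  (\sum_(i <- s) mu (A i) <= mu (\big[setU/set0]_(i <- s) A i))%E.
Proof.
move=> + mA HA Hfin; elim: s => [|i s IH] /=; first by rewrite !big_nil measure0.
move=> /andP[nis us]; rewrite !big_cons measureUfinl //; last exact: bigU_meas.
rewrite mu_null_inter //; last first.
  move=> j js; apply: HA; apply/eqP => ij; by rewrite ij js in nis.
by rewrite sube0; apply: leeD2l; exact: IH.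
Qed.

End Sets.

Lemma bigmin_gt (J : Type) (r : seq J) (F : J -> R) (Cr t : R) :
  (t < \big[Order.min/Cr]_(i <- r) F i) = (t < Cr) && all (fun i => t < F i) r.
Proof.
elim: r => [|i r IH]; rewrite ?big_nil ?big_cons ?andbT // lt_min IH.
by rewrite andbCA.
Qed.

Lemma bigmin_bnd (J : Type) (r : seq J) (F : J -> R) (Cr : R) :
  0 <= Cr -> (forall i, 0 <= F i) ->
  0 <= \big[Order.min/Cr]_(i <- r) F i <= Cr.
Proof.
move=> C0 F0; elim: r => [|i r IH]; rewrite ?big_nil ?big_cons ?C0 ?lexx //.
move/andP: IH => [h1 h2].
by rewrite le_min F0 h1 ge_min h2 orbT.
Qed.

Lemma dist_shift (x c : 'rV[R]_p) : eucl_dist (x - c) 0 = eucl_dist x c.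
Proof. by rewrite /eucl_dist; congr Num.sqrt; apply: eq_bigr => i _; rewrite !mxE subr0. Qed.


Section Main.
Context (k : nat) (X : set T) (HXm : measurable X) (Xfin : (mu X < +oo)%E)
  (h : R -> R) (Hh_mono : forall r s, 0 <= r -> r <= s -> h r <= h s)
  (Cr : R) (y : 'I_k -> 'rV[R]_p) (d : R)
  (Hcov : \bigcup_(j in [set: 'I_k]) cball (y j) d = X)
  (Hdisj : forall i j : 'I_k, i != j -> mu (cball (y i) d `&` cball (y j) d) = 0%E).

Definition E t (c : 'rV[R]_p) : set T := [set x | h (eucl_dist x c) <= t].
Definition U t (S : 'I_k -> 'rV[R]_p) : set T :=
  \big[setU/set0]_(j <- index_enum 'I_k) E t (S j).

Lemma E_meas t c : measurable (E t c).
Proof. exact: (meas_le_set _ t (hd_meas _ Hh_mono c)). Qed.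

Lemma U_meas t S : measurable (U t S).
Proof. by apply: bigU_meas => j; exact: E_meas. Qed.

Lemma cball_meas c : measurable (cball c d : set T).
Proof. exact: (meas_le_set _ d (dist_meas c)). Qed.

Lemma E_inv t c : mu (E t c) = mu (E t 0).
Proof.
rewrite -(shift_inv c _ (E_meas t 0)); congr (mu _).
by apply/seteqP; split => x; rewrite /E /shift /= dist_shift.
Qed.

Lemma cost_gt (S : 'I_k -> 'rV[R]_p) (t : R) (x : T) : (t < cost h Cr S x) <-> (t < Cr /\ ~ U t S x).
Proof.
rewrite /cost bigmin_gt; split.
- move=> /andP[tC /allP Hall]; split => // /bigU_mem [j [_ Ej]].
  move: (Hall j (mem_index_enum j)); rewrite /E /= in Ej.
  by rewrite ltNge Ej.
- move=> [tC nU]; rewrite tC /=; apply/allP => j _; rewrite ltNge; apply/negP => Hj.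
  apply: nU; apply/bigU_mem; exists j; split => //; exact: mem_index_enum.
Qed.

Lemma core (S' : 'I_k -> 'rV[R]_p) (t : R) : (mu (X `&` U t S') <= mu (X `&` U t y))%E.
Proof.
have [[r [r0 [dr hr]]]|nA] := pselect (exists r, 0 <= r /\ d < r /\ h r <= t).
  rewrite (setIidl (A:=X) (B:=U t y)).
    apply: le_measure; rewrite ?inE;
      [exact: measurableI HXm (U_meas _ _) | exact: HXm | exact: subIsetl].
  move=> x Xx; rewrite -Hcov in Xx; case: Xx => j _ Hj.
  apply/bigU_mem; exists j; split; first exact: mem_index_enum.
  rewrite /E /=; apply: le_trans hr; apply: Hh_mono; first exact: dist_ge0.
  exact: le_trans Hj (ltW dr).
have EB c : E t c `<=` cball c d.
  move=> x; rewrite /E /cball /= => Hx; rewrite leNgt; apply/negP => dx.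
  by apply: nA; exists (eucl_dist x c); split; [exact: dist_ge0|split].
have cX j : cball (y j) d `<=` X.
  by move=> x Hx; rewrite -Hcov; exists j.
have UX : U t y `<=` X.
  by move=> x /bigU_mem [j [_ Ej]]; apply: (cX j); exact: EB.
rewrite (setIidr UX).
apply: (@le_trans _ _ (mu (U t S'))).
  apply: le_measure; rewrite ?inE; [exact: measurableI HXm (U_meas _ _)| exact: U_meas | exact: subIsetr].
apply: le_trans (mu_subadd _ (index_enum 'I_k) (fun j => E t (S' j))
  (fun j => E_meas t (S' j))) _.
rewrite (eq_bigr (fun j => mu (E t (y j)))); last by move=> j _; rewrite E_inv [in RHS]E_inv.
apply: (mu_superadd _ (index_enum 'I_k) (fun j => E t (y j))).
- exact: index_enum_uniq.
- by move=> j; exact: E_meas.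
- move=> i j ij; apply/eqP; rewrite eq_le measure_ge0 andbT -(Hdisj _ _ ij).
  apply: le_measure; rewrite ?inE; try (apply: measurableI; [exact: E_meas|exact: E_meas]).
    by apply: measurableI; exact: cball_meas.
  by move=> x [Hi Hj]; split; exact: EB.
- move=> j; apply: le_lt_trans Xfin; apply: le_measure; rewrite ?inE //; first exact: E_meas.
  by move=> x Hx; apply: (cX j); exact: EB.
Qed.

Lemma distr (S' : 'I_k -> 'rV[R]_p) (t : R) : (mu (X `&` [set x | (t < cost h Cr y x)%R]) <=
  mu (X `&` [set x | (t < cost h Cr S' x)%R]))%E.
Proof.
have [tC|Ct] := ltP t Cr; last first.
  rewrite (_ : _ `&` _ = set0) ?measure0 ?measure_ge0 //.
  apply/seteqP; split => x // [_ /cost_gt [H _]].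
  by move: Ct; rewrite leNgt H.
have setE S : X `&` [set x | t < cost h Cr S x] = X `\` U t S.
  apply/seteqP; split => x /= [Xx H]; split => //; first by case/cost_gt: H.
  exact/cost_gt.
rewrite !setE !measureD //; try exact: U_meas.
apply: leeB => //; exact: core.
Qed.

Lemma opt_main (lam : R) (Hlam : 0 < lam) (Hh_nneg : forall r, 0 <= r -> 0 <= h r)
  (HCr : 0 < Cr) (S' : 'I_k -> 'rV[R]_p) :
  (exp_cost mu X lam h Cr y <= exp_cost mu X lam h Cr S')%E.
Proof.
rewrite /exp_cost.
have cb (S : 'I_k -> 'rV[R]_p) (x : 'rV[R]_p) : 0 <= cost h Cr S x <= Cr.
  rewrite /cost; apply: bigmin_bnd; [exact: ltW | move=> j /=; apply: Hh_nneg; exact: sqrtr_ge0].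
apply: (@dist_cmp R _ _ mu X _ _ (lam * Cr)) => //.
- apply: measurable_funM; [exact: measurable_cst | exact: cost_meas].
- apply: measurable_funM; [exact: measurable_cst | exact: cost_meas].
- exact: mulr_gt0.
- move=> x _; have /andP[a b] := cb y x.
  by rewrite mulr_ge0 ?(ltW Hlam) //= ler_pM2l.
- by move=> x _; have /andP[a b] := cb S' x; exact: mulr_ge0 (ltW Hlam) a.
- move=> t; have := distr S' (t / lam).
  have sE S : [set x | t < lam * cost h Cr S x] = [set x | t / lam < cost h Cr S x].
    by apply/seteqP; split => x /=; rewrite ltr_pdivrMr // mulrC.
  by rewrite !sE.
Qed.

End Main.

End S.

Theorem corollary2 (R : realType) (p k : nat)
    (mu : {measure set (Rp R p) -> \bar R}) (Hmu : is_lebesgue mu)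
    (X : set (Rp R p)) (HXm : measurable X)
    (HXb : exists M : R, forall x, X x -> eucl_dist x (0 : 'rV[R]_p) <= M)
    (lam : R) (Hlam : 0 < lam)
    (h : R -> R) (Hh_mono : forall r s, 0 <= r -> r <= s -> h r <= h s)
    (Hh_nneg : forall r, 0 <= r -> 0 <= h r)
    (Cr : R) (HCr : 0 < Cr)
    (y : 'I_k -> 'rV[R]_p) (Hy : cache_state X y)
    (Htess : exists d : R,
        \bigcup_(j in [set: 'I_k]) cball (y j) d = X /\
        forall i j : 'I_k, i != j -> mu (cball (y i) d `&` cball (y j) d) = 0%E) :
  optimal mu X lam h Cr y.
Proof.
case: Htess => d [Hcov Hdisj].
have Xfin : (mu X < +oo)%E.
  case: HXb => M HM.
  pose M' := `|M| + 1.
  apply: (le_lt_trans _ (mu_box_fin _ _ _ Hmu (\row_i (- M')) (\row_i M'))).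
  apply: le_measure; rewrite ?inE //; first exact: box_meas.
  move=> x Xx i; rewrite !mxE.
  have := le_trans (coord_le_dist _ _ x i) (HM x Xx).
  rewrite ler_norml => /andP[l u]; have := ler_norm M.
  rewrite /M' => Mn; apply/andP; split; lra.
split => // S' _.
exact: (opt_main _ _ _ Hmu _ _ HXm Xfin _ Hh_mono _ _ _ Hcov Hdisj _ Hlam Hh_nneg HCr S').
Qed.
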